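(* Let $X$ be an infinite set. No topological extension ${}^{*}X$ of $X$ satisfies simultaneously the three principles Ind, Poss and Tran.
   Context: A topological extension of a set $X$ is a $T_1$ topological space ${}^{*}X$ containing $X$ as a discrete dense subspace, together with an assignment to each function $f:X\to X$ of a continuous map ${}^{*}f:{}^{*}X\to{}^{*}X$ extending $f$, such that (c) ${}^{*}g\circ{}^{*}f={}^{*}(g\circ f)$ for all $f,g:X\to X$, and (i) if $f(x)=x$ for all $x\in A\subseteq X$, then ${}^{*}f(\xi)=\xi$ for all $\xi$ in the closure of $A$ in ${}^{*}X$. For $A\subseteq X$ write ${}^{*}A$ for the closure of $A$ in ${}^{*}X$. Principle Ind: for any two distinct $\xi,\eta\in{}^{*}X$ there is $A\subseteq X$ with $\xi\in{}^{*}A$ and $\eta\notin{}^{*}A$. Principle Poss: for every family $\mathcal F$ of subsets of $X$, if $\bigcap_{A\in\mathcal F}{}^{*}A=\emptyset$, then there are finitely many $A_1,\dots,A_n\in\mathcal F$ with $A_1\cap\dots\cap A_n=\emptyset$. Principle Tran: let $L$ be the first-order language having a constant symbol for each element of $X$, an $n$-ary relation symbol for each $R\subseteq X^n$ and an $n$-ary function symbol for each $F:X^n\to X$ ($n\ge1$), and regard $X$ as an $L$-structure in the obvious way. ${}^{*}X$ satisfies Tran if ${}^{*}X$ can be made into an $L$-structure in which each constant $x$ denotes $x$, each unary function symbol $f$ denotes ${}^{*}f$ and each unary relation symbol $A$ denotes ${}^{*}A$, such that for every $L$-sentence $\sigma$, $\sigma$ holds in $X$ if and only if $\sigma$ holds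 in ${}^{*}X$. *)

(* Defs.v *)
From HB Require Import structures.
From mathcomp Require Import all_boot all_order.
From mathcomp Require Import boolp classical_sets functions cardinality.
From mathcomp Require Import topology.

Set Implicit Arguments.
Unset Strict Implicit.
Unset Printing Implicit Defensive.

Local Open Scope classical_set_scope.

Definition starset (X : Type) (S : topologicalType) (e : X -> S) (A : set X)
  : set S := closure (e @` A).

Definition topological_extension (X : Type) (S : topologicalType)
    (e : X -> S) (star : (X -> X) -> (S -> S)) : Prop :=
  @accessible_space S /\
  injective e /\
  [/\
      (forall x : X, exists U : set S,
          open U /\ U `&` range e = [set e x]),
      dense (range e),
      (forall f : X -> X, continuous (star f)
                          /\ (forall x, star f (e x) = e (f x))),
      (forall f g : X -> X, star g \o star f = star (g \o f))
    & (forall (f : X -> X) (A : set X),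
          (forall x, A x -> f x = x) ->
          forall xi, starset e A xi -> star f xi = xi)].

Definition principle_Ind (X : Type) (S : topologicalType) (e : X -> S) : Prop :=
  forall xi eta : S, xi <> eta ->
    exists A : set X, starset e A xi /\ ~ starset e A eta.

Definition principle_Poss (X : Type) (S : topologicalType) (e : X -> S) : Prop :=
  forall F : set (set X),
    \bigcap_(A in F) starset e A = set0 ->
    exists G : set (set X),
      [/\ G `<=` F, finite_set G & \bigcap_(A in G) A = set0].

(* n.+1-ary function symbols are the functions F : X^(n+1) -> X, n.+1-ary
   relation symbols are the relations R ⊆ X^(n+1) (X^(n+1) rendered as
   'I_n.+1 -> X); constant symbols are the elements of X. *)

Inductive term (X : Type) : Type :=
  | TVar : nat -> term X
  | TConst : X -> term X
  | TApp : forall n : nat, ((('I_n.+1) -> X) -> X) -> ('I_n.+1 -> term X) -> term X.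

Inductive formula (X : Type) : Type :=
  | FEq : term X -> term X -> formula X
  | FRel : forall n : nat, set ('I_n.+1 -> X) -> ('I_n.+1 -> term X) -> formula X
  | FNot : formula X -> formula X
  | FAnd : formula X -> formula X -> formula X
  | FOr : formula X -> formula X -> formula X
  | FImp : formula X -> formula X -> formula X
  | FAll : nat -> formula X -> formula X
  | FEx : nat -> formula X -> formula X.

Fixpoint occurs (X : Type) (k : nat) (t : term X) : Prop :=
  match t with
  | TVar i => i = k
  | TConst _ => False
  | TApp n _ a => exists i : 'I_n.+1, occurs k (a i)
  end.

Fixpoint free_in (X : Type) (k : nat) (phi : formula X) : Prop :=
  match phi with
  | FEq t u => occurs k t \/ occurs k u
  | FRel n _ a => exists i : 'I_n.+1, occurs k (a i)
  | FNot p => free_in k p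
  | FAnd p q | FOr p q | FImp p q => free_in k p \/ free_in k q
  | FAll i p | FEx i p => i <> k /\ free_in k p
  end.

Definition sentence (X : Type) (phi : formula X) : Prop :=
  forall k, ~ free_in k phi.

Record Lstruct (X D : Type) := {
  Lconst : X -> D;
  Lfun : forall n : nat, ((('I_n.+1) -> X) -> X) -> ('I_n.+1 -> D) -> D;
  Lrel : forall n : nat, set ('I_n.+1 -> X) -> set ('I_n.+1 -> D) }.

Section Semantics.
Variables (X D : Type) (M : Lstruct X D).

Fixpoint eval (v : nat -> D) (t : term X) : D :=
  match t with
  | TVar i => v i
  | TConst x => Lconst M x
  | TApp n F a => Lfun M F (fun i => eval v (a i))
  end.

Definition upd (v : nat -> D) (k : nat) (d : D) : nat -> D :=
  fun i => if i == k then d else v i.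

Fixpoint sat (v : nat -> D) (phi : formula X) : Prop :=
  match phi with
  | FEq t u => eval v t = eval v u
  | FRel n R a => Lrel M R (fun i => eval v (a i))
  | FNot p => ~ sat v p
  | FAnd p q => sat v p /\ sat v q
  | FOr p q => sat v p \/ sat v q
  | FImp p q => sat v p -> sat v q
  | FAll k p => forall d : D, sat (upd v k d) p
  | FEx k p => exists d : D, sat (upd v k d) p
  end.

Definition holds (phi : formula X) : Prop := forall v : nat -> D, sat v phi.

End Semantics.

Definition standard_struct (X : Type) : Lstruct X X :=
  {| Lconst := id;
     Lfun := fun n F a => F a;
     Lrel := fun n R a => R a |}.

Definition principle_Tran (X : Type) (S : topologicalType) (e : X -> S)
    (star : (X -> X) -> (S -> S)) : Prop :=
  exists M : Lstruct X S,
    [/\ (forall x : X, Lconst M x = e x),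
        (forall (F : ('I_1 -> X) -> X) (s : S),
            Lfun M F (fun _ => s) = star (fun x => F (fun _ => x)) s),
        (forall (R : set ('I_1 -> X)) (s : S),
            Lrel M R (fun _ => s) <-> starset e (fun x => R (fun _ => x)) s)
      & (forall sigma : formula X, sentence sigma ->
            (holds (standard_struct X) sigma <-> holds M sigma))].

(* Main.v *)
Require Import Defs.
From mathcomp Require Import all_boot all_order.
From mathcomp Require Import boolp classical_sets functions cardinality.
From mathcomp Require Import topology.

Local Open Scope classical_set_scope.

Lemma nat_inj_of_infinite (T : Type) : infinite_set [set: T] ->
  exists f : nat -> T, injective f.
Proof.
elim/Ppointed: T => T.
  move=> Tinf; exfalso; apply: Tinf; rewrite emptyE; exact: finite_set0.
move=> /infiniteP/pcard_leTP H. have [f finj] := (injPex.1 H).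
exists f => a b fab; apply: finj => //; exact: in_setT.
Qed.

Section Forms.
Context {X : Type}.
Definition v0 : term X := TVar X 0.
Definition v1 : term X := TVar X 1.
Definition app (f : X -> X) (t : term X) : term X :=
  @TApp X 0 (fun a => f (a ord0)) (fun _ => t).
Definition rel (A : set X) (t : term X) : formula X :=
  @FRel X 0 (fun a => A (a ord0)) (fun _ => t).
Definition S1 (A B C : set X) : formula X :=
  FAll 0 (FImp (rel A v0) (FImp (rel B v0) (rel C v0))).
Definition S2 (A : set X) (f : X -> X) (B : set X) : formula X :=
  FAll 0 (FImp (rel A v0) (rel B (app f v0))).
Definition S3 (A B : set X) : formula X :=
  FAll 0 (FOr (rel A v0) (rel B v0)).
Definition S4 (E : set X) (p q : X -> X) : formula X :=
  FAll 0 (FAll 1 (FImp (rel E v0) (FImp (rel E v1)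
    (FImp (FEq (app p v0) (app p v1))
      (FImp (FEq (app q v0) (app q v1)) (FEq v0 v1)))))).
End Forms.

Lemma S1_sent X (A B C : set X) : sentence (S1 A B C).
Proof. move=> k /=; firstorder. Qed.
Lemma S2_sent X (A : set X) f B : sentence (S2 A f B).
Proof. move=> k /=; firstorder. Qed.
Lemma S3_sent X (A B : set X) : sentence (S3 A B).
Proof. move=> k /=; firstorder. Qed.
Lemma S4_sent X (E : set X) p q : sentence (S4 E p q).
Proof. move=> k /=; firstorder; subst; congruence. Qed.

Theorem corollary2p4 (X : Type) (Xinf : infinite_set [set: X])
    (S : topologicalType) (e : X -> S) (star : (X -> X) -> (S -> S)) :
  topological_extension e star ->
  ~ [/\ principle_Ind e, principle_Poss e & principle_Tran e star].
Proof.
move=> _ [Ind Poss [M [hc hf hr htr]]].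
have T1 : forall A B C : set X, (forall x, A x -> B x -> C x) ->
    forall s, starset e A s -> starset e B s -> starset e C s.
  move=> A B C H s.
  have HM : holds M (S1 A B C).
    by apply/(htr _ (S1_sent _ A B C)) => v /= x; apply: H.
  have := HM (fun _ => s) s; rewrite /upd /=.
  move=> H2 /(hr (fun a => A (a ord0))) HA /(hr (fun a => B (a ord0))) HB.
  by apply/(hr (fun a => C (a ord0))); apply: H2.
have T2 : forall (A B : set X) f, (forall x, A x -> B (f x)) ->
    forall s, starset e A s -> starset e B (star f s).
  move=> A B f H s.
  have HM : holds M (S2 A f B).
    by apply/(htr _ (S2_sent _ A f B)) => v /= x; apply: H.
  have := HM (fun _ => s) s; rewrite /upd /=.
  move=> H2 /(hr (fun a => A (a ord0))) HA.
  have := H2 HA. rewrite hf. by move/(hr (fun a => B (a ord0))).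
have T3 : forall (A B : set X), (forall x, A x \/ B x) ->
    forall s, starset e A s \/ starset e B s.
  move=> A B H s.
  have HM : holds M (S3 A B).
    by apply/(htr _ (S3_sent _ A B)) => v /= x; apply: H.
  have := HM (fun _ => s) s; rewrite /upd /=.
  by case=> [/(hr (fun a => A (a ord0)))|/(hr (fun a => B (a ord0)))]; [left|right].
have T4 : forall (E : set X) p q,
    (forall x y, E x -> E y -> p x = p y -> q x = q y -> x = y) ->
    forall s t, starset e E s -> starset e E t -> star p s = star p t ->
      star q s = star q t -> s = t.
  move=> E p q H s t.
  have HM : holds M (S4 E p q).
    by apply/(htr _ (S4_sent _ E p q)) => v /= x y; apply: H.
  have := HM (fun _ => s) s t; rewrite /upd /=.
  move=> H2 /(hr (fun a => E (a ord0))) HA /(hr (fun a => E (a ord0))) HB.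
  move=> Hp Hq; apply: H2 => //; rewrite !hf //.
have E0 : forall s, ~ starset e set0 s.
  by move=> s; rewrite /starset image_set0 closure0.
have [io ioI] := nat_inj_of_infinite _ Xinf.
pose N := range io.
have Ninf : infinite_set N.
  move=> Nfin; apply: infinite_nat.
  pose g := fun z : X => if pselect (exists n, io n = z) is left H
                         then projT1 (cid H) else 0.
  have gK : forall n, g (io n) = n.
    move=> n; rewrite /g; case: pselect => [H|[]]; last by exists n.
    by case: (cid H) => m /= /ioI.
  suff -> : [set: nat] = g @` N by apply: finite_image.
  apply/seteqP; split=> n // _; exists (io n); [by exists n|exact: gK].
have [xi Hxi] : exists xi, forall K, finite_set K -> starset e (N `\` K) xi.
  apply: contrapT => nex.
  have : \bigcap_(A in (fun B => exists K, finite_set K /\ B = N `\` K))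
            starset e A = set0.
    apply/seteqP; split=> s // Hs; apply: nex; exists s => K fK.
    by apply: Hs; exists K.
  move/Poss => [G [GF finG GI]].
  have Ufin : finite_set (\bigcup_(B in G) (N `\` B)).
    apply: bigcup_finite => // B /GF [K [fK ->]].
    apply: sub_finite_set fK => x [Nx /= nx]; apply: contrapT => nK; by apply: nx.
  have [x [Nx nU]] := infinite_setN0 (infinite_setD Ninf Ufin).
  have : (\bigcap_(A in G) A) x.
    move=> B GB; apply: contrapT => nB; apply: nU; exists B => //.
  by rewrite GI.
have UI : forall A B, starset e A xi -> starset e B xi ->
    starset e (A `&` B) xi.
  by move=> A B; apply: T1 => x a b; split.
have UN : starset e N xi by have := Hxi set0 (finite_set0 _); rewrite setD0.
have Une : forall A, starset e A xi -> exists z, A z.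
  move=> A UA; apply: contrapT => nex.
  have A0 : A = set0 by apply/seteqP; split=> z // Az; apply: nex; exists z.
  by move: UA; rewrite A0 => /E0.
have two : forall A, starset e A xi ->
    exists a b, a <> b /\ A (io a) /\ A (io b).
  move=> A UA.
  have [_ [[a _ <-] Aa]] := Une _ (UI _ _ UN UA).
  have := UI _ _ (UI _ _ UN UA) (Hxi [set io a] (finite_set1 _)).
  move=> /Une [_ [[[b _ <-] Ab] [_ nb]]].
  exists a, b; split=> //; move=> ab; apply: nb; rewrite ab.
  by [].
pose h := fun p : nat * nat => io (pickle p).
have hI : injective h.
  move=> p q /ioI; exact: (pcan_inj pickleK).
pose inv := fun z : X => if pselect (exists p, h p = z) is left H
                         then projT1 (cid H) else (0, 0)%N.
have invK : forall p, inv (h p) = p.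
  move=> p; rewrite /inv; case: pselect => [H|[]]; last by exists p.
  by case: (cid H) => q /= /hI.
pose p1 := fun z => io (inv z).1.
pose p2 := fun z => io (inv z).2.
pose D := fun z => exists a b, (a < b)%N /\ z = h (a, b).
pose D' := fun z => exists a b, (b < a)%N /\ z = h (a, b).
pose Q := fun (DD : set X) (A : set X) z => DD z /\ A (p1 z) /\ A (p2 z).
have p1h : forall a b, p1 (h (a, b)) = io a by move=> a b; rewrite /p1 invK.
have p2h : forall a b, p2 (h (a, b)) = io b by move=> a b; rewrite /p2 invK.
have QDne : forall A, starset e A xi -> exists z, Q D A z.
  move=> A /two [a [b [ab [Aa Ab]]]].
  case: (ltngtP a b) => [lab|lba|eab]; last by [].
    by exists (h (a, b)); split; [exists a, b|rewrite p1h p2h].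
  by exists (h (b, a)); split; [exists b, a|rewrite p1h p2h].
have QD'ne : forall A, starset e A xi -> exists z, Q D' A z.
  move=> A /two [a [b [ab [Aa Ab]]]].
  case: (ltngtP a b) => [lab|lba|eab]; last by [].
    by exists (h (b, a)); split; [exists b, a|rewrite p1h p2h].
  by exists (h (a, b)); split; [exists a, b|rewrite p1h p2h].
have zeta : forall DD, (forall A, starset e A xi -> exists z, Q DD A z) ->
    exists z, forall A, starset e A xi -> starset e (Q DD A) z.
  move=> DD Hne; apply: contrapT => nex.
  pose F1 := fun Z => exists A, starset e A xi /\ Z = Q DD A.
  have : \bigcap_(Z in F1) starset e Z = set0.
    apply/seteqP; split=> s // Hs; apply: nex; exists s => A UA.
    by apply: Hs; exists A.
  move/Poss => [G [GF finG GI]].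
  have [sq Gs] := (finite_seqP G).1 finG.
  have key : forall sq : seq (set X), (forall Z, Z \in sq -> F1 Z) ->
      exists A, starset e A xi /\ Q DD A `<=` \bigcap_(Z in [set` sq]) Z.
    elim=> [|Z t IH] Hs.
      by exists N; split=> // z _ Z0 /=; rewrite in_nil.
    have [A0 [UA0 ->]] := Hs Z (mem_head _ _).
    have [A1 [UA1 sub]] : exists A, starset e A xi /\
        Q DD A `<=` \bigcap_(Z in [set` t]) Z.
      by apply: IH => Z' h'; apply: Hs; rewrite in_cons h' orbT.
    exists (A0 `&` A1); split; first exact: UI.
    move=> z [Dz [[a0 a1] [b0 b1]]] Z' /=; rewrite in_cons => /orP [/eqP -> //|Zs].
    by apply: (sub z) => //; split.
  have [A [UA sub]] : exists A, starset e A xi /\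
      Q DD A `<=` \bigcap_(Z in [set` sq]) Z.
    by apply: key => Z h'; apply: GF; rewrite Gs.
  have [z Qz] := Hne A UA.
  by have := sub z Qz; rewrite -Gs GI.
have proj : forall (p : X -> X) DD z, (forall A z, Q DD A z -> A (p z)) ->
    (forall A, starset e A xi -> starset e (Q DD A) z) -> star p z = xi.
  move=> p DD z Hp Hz; apply: contrapT => ne.
  have [A [HA nA]] := Ind _ _ ne.
  have [/nA []|UAc] := T3 A (~` A) (fun x => match pselect (A x) with
                   left a => or_introl a | right na => or_intror na end) xi.
  have HAc := T2 _ _ p (Hp (~` A)) _ (Hz _ UAc).
  apply: (E0 (star p z)).
  exact: (T1 A (~` A) set0 (fun x a na => na a) _ HA HAc).
have [z1 Hz1] := zeta D QDne.
have [z2 Hz2] := zeta D' QD'ne.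
have z12 : z1 = z2.
  apply: (T4 (range h) p1 p2).
  - move=> _ _ [p _ <-] [q _ <-]; case: p => a b; case: q => c d.
    by rewrite !p1h !p2h => /ioI -> /ioI ->.
  - apply: (T1 (Q D N) (Q D N) (range h)) (Hz1 N UN) (Hz1 N UN).
    by move=> z [[a [b [_ ->]]] _] _; exists (a, b).
  - apply: (T1 (Q D' N) (Q D' N) (range h)) (Hz2 N UN) (Hz2 N UN).
    by move=> z [[a [b [_ ->]]] _] _; exists (a, b).
  - rewrite (proj p1 D z1 _ Hz1); last by move=> A z [_ []].
    by rewrite (proj p1 D' z2 _ Hz2); last by move=> A z [_ []].
  - rewrite (proj p2 D z1 _ Hz1); last by move=> A z [_ [_]].
    by rewrite (proj p2 D' z2 _ Hz2); last by move=> A z [_ [_]].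
apply: (E0 z1).
apply: (T1 (Q D N) (Q D' N) set0 _ z1 (Hz1 N UN)); last by rewrite z12; exact: Hz2.
move=> z [[a [b [ab ->]]] _] [[c [d [dc /hI [ac bd]]]] _].
by move: ab; rewrite ac bd => /(ltn_trans dc); rewrite ltnn.
Qed.
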